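(* Let $q$ be a prime power and let $\mathbf{G}\in\mathbb{F}_q^{k\times n}$ be a generator matrix of a linear $[n,k]_q$ code. Consider a coded storage system with files $f_1,\dots,f_k$ in which, for each $i\in[k]$, file $f_i$ has a given list $\mathcal{R}_i=(R_{i,1},\dots,R_{i,t_i})$ of $t_i\ge1$ recovery sets, each of size $1$ or $2$, and all servers have service rate $1$. Then: (i) if $\tilde{\boldsymbol{x}}^\star=(\tilde x^\star_{i,j})$ is a maximum matching vector in the graph representation of the code, the vector $\boldsymbol{\lambda}$ with $\lambda_i=\sum_{j=1}^{t_i}\tilde x^\star_{i,j}$ is a maximum demand vector in $\mathcal{S}_I(\mathbf{G})$; and (ii) for every maximum demand vector $\boldsymbol{\lambda}^\star$ of $\mathcal{S}_I(\mathbf{G})$ there exists a maximum matching vector $\tilde{\boldsymbol{x}}^\star$ in the graph representation with $\lambda^\star_i=\sum_{j=1}^{t_i}\tilde x^\star_{i,j}$ for all $i\in[k]$.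
   Context: Let $\mathbf{g}_1,\dots,\mathbf{g}_n$ be the columns of $\mathbf{G}$ and $\mathbf{e}_i$ the $i$-th unit vector. A set $R\subseteq[n]$ is a recovery set for file $f_i$ if there exist nonzero $\alpha_j\in\mathbb{F}_q$ ($j\in R$) with $\sum_{j\in R}\alpha_j\mathbf{g}_j=\mathbf{e}_i$. The integral service rate region $\mathcal{S}_I(\mathbf{G})$ is the set of $\boldsymbol{\lambda}$ for which there exist integers $\lambda_{i,j}\ge0$ with $\sum_{j=1}^{t_i}\lambda_{i,j}=\lambda_i$ for all $i$ and $\sum_{i=1}^k\sum_{j\in[t_i]:\,l\in R_{i,j}}\lambda_{i,j}\le1$ for every server $l\in[n]$. A maximum demand vector of $\mathcal{S}_I(\mathbf{G})$ is a $\boldsymbol{\lambda}\in\mathcal{S}_I(\mathbf{G})$ maximizing $\sum_i\lambda_i$ over $\mathcal{S}_I(\mathbf{G})$. The graph representation is the (multi)graph with vertex set $[n]$ plus one new dummy vertex $d_{i,j}$ for each recovery set $R_{i,j}$ of size 1, and edges indexed by $(i,j)$: if $R_{i,j}=\{a,b\}$ the edge joins $a$ and $b$; if $R_{i,j}=\{r\}$ it joins $r$ and $d_{i,j}$. A matching vector assigns $\tilde x_e\in\{0,1\}$ to edges so that at each vertex the sum over incident edges is at most 1; a maximum matching vector maximizes $\sum_e\tilde x_e$. *)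

(* Defs.v *)
From mathcomp Require Import all_boot all_order all_algebra.
Set Implicit Arguments. Unset Strict Implicit. Unset Printing Implicit Defensive.
Import GRing.Theory.

Section Defs.
Variables (F : finFieldType) (k n : nat).

Definition recovery_set (G : 'M[F]_(k, n)) (i : 'I_k) (R : {set 'I_n}) : Prop :=
  exists alpha : 'I_n -> F,
    (forall j, j \in R -> alpha j != 0%R) /\
    (\sum_(j in R) alpha j *: col j G)%R = delta_mx i (@ord0 0).

Variable t : 'I_k -> nat.

Definition edge := {i : 'I_k & 'I_(t i)}.

Variable Rs : forall i : 'I_k, 'I_(t i) -> {set 'I_n}.

Definition Rset (e : edge) : {set 'I_n} := Rs (tagged e).

Definition in_SI (lam : 'I_k -> nat) : Prop :=
  exists lij : edge -> nat,
    (forall i : 'I_k, \sum_(j < t i) lij (Tagged (fun i => 'I_(t i)) j) = lam i) /\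
    (forall l : 'I_n, \sum_(e : edge | l \in Rset e) lij e <= 1).

Definition max_demand (lam : 'I_k -> nat) : Prop :=
  in_SI lam /\
  forall mu, in_SI mu -> \sum_(i < k) mu i <= \sum_(i < k) lam i.

(* Vertices of the graph representation: servers [n] plus one dummy
   vertex d_e for each edge e (the dummy vertex of e is only incident
   to e, and only when R_e has size 1; otherwise it is isolated). *)
Definition vertex := ('I_n + edge)%type.

Definition incident (e : edge) (v : vertex) : bool :=
  match v with
  | inl l => l \in Rset e
  | inr d => (d == e) && (#|Rset e| == 1)
  end.

Definition matching_vector (x : edge -> nat) : Prop :=
  (forall e, x e <= 1) /\
  (forall v : vertex, \sum_(e : edge | incident e v) x e <= 1).

Definition max_matching_vector (x : edge -> nat) : Prop :=
  matching_vector x /\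
  forall y, matching_vector y -> \sum_(e : edge) y e <= \sum_(e : edge) x e.

End Defs.

(* Main.v *)
Require Import Defs.
From mathcomp Require Import all_boot all_order all_algebra.

Set Implicit Arguments.
Section Aux.
Variables (k n : nat) (t : 'I_k -> nat) (Rs : forall i : 'I_k, 'I_(t i) -> {set 'I_n}).

Lemma sum_edge (x : edge t -> nat) :
  \sum_(e : edge t) x e = \sum_(i < k) \sum_(j < t i) x (Tagged (fun i => 'I_(t i)) j).
Proof.
rewrite [RHS]sig_big_dep /=.
by apply: eq_big => [[i j]|[i j]].
Qed.

Hypothesis Hne : forall e : edge t, 0 < #|Rset Rs e|.

Lemma le1_of (x : edge t -> nat) :
  (forall l : 'I_n, \sum_(e : edge t | l \in Rset Rs e) x e <= 1) ->
  forall e, x e <= 1.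
Proof.
move=> H e; have /card_gt0P [l Hl] := Hne e.
apply: leq_trans (H l); by rewrite (bigD1 e) //= leq_addr.
Qed.

Lemma matching_of (x : edge t -> nat) :
  (forall l : 'I_n, \sum_(e : edge t | l \in Rset Rs e) x e <= 1) ->
  matching_vector Rs x.
Proof.
move=> H; split; first exact: le1_of.
case=> [l|d] /=; first exact: H.
rewrite big_mkcond (bigD1 d) //= big1 ?addn0.
  by rewrite eqxx /=; case: ifP => // _; apply: le1_of.
by move=> e /negbTE; rewrite eq_sym => ->.
Qed.

Lemma SI_iff (lam : 'I_k -> nat) :
  in_SI Rs lam <-> exists x, matching_vector Rs x /\
     forall i, lam i = \sum_(j < t i) x (Tagged (fun i => 'I_(t i)) j).
Proof.
split.
- move=> [l [H1 H2]]; exists l; split; first exact: matching_of.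
  by move=> i; rewrite H1.
- move=> [x [[_ Hm] H]]; exists x; split; first by move=> i; rewrite H.
  by move=> l; apply: (Hm (inl l)).
Qed.

End Aux.

Theorem corollary4 (F : finFieldType) (k n : nat) (G : 'M[F]_(k, n))
  (t : 'I_k -> nat) (Rs : forall i : 'I_k, 'I_(t i) -> {set 'I_n}) :
  \rank G = k ->
  (forall i, 0 < t i) ->
  (forall i (j : 'I_(t i)), #|Rs i j| = 1 \/ #|Rs i j| = 2) ->
  (forall i (j : 'I_(t i)), recovery_set G i (Rs i j)) ->
  (forall x : edge t -> nat, max_matching_vector Rs x ->
     max_demand Rs (fun i => \sum_(j < t i) x (Tagged (fun i => 'I_(t i)) j)))
  /\
  (forall lam : 'I_k -> nat, max_demand Rs lam ->
     exists x : edge t -> nat, max_matching_vector Rs x /\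
       forall i, lam i = \sum_(j < t i) x (Tagged (fun i => 'I_(t i)) j)).
Proof.
move=> _ _ Hc _.
have Hne : forall e : edge t, 0 < #|Rset Rs e|.
  by case=> i j; rewrite /Rset /=; case: (Hc i j) => ->.
split.
- move=> x [Hx Hmax]; split.
    by apply: (proj2 (SI_iff Rs Hne _)); exists x.
  move=> mu /(proj1 (SI_iff Rs Hne _)) [y [Hy Hmu]].
  rewrite (eq_bigr _ (fun i _ => Hmu i)) -!sum_edge; exact: Hmax.
- move=> lam [/(proj1 (SI_iff Rs Hne _)) [x [Hx Hl]] Hmax].
  exists x; split => //; split => // y Hy.
  rewrite !sum_edge -(eq_bigr _ (fun i _ => Hl i)).
  apply: Hmax; apply: (proj2 (SI_iff Rs Hne _)); by exists y.
Qed.
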